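(* Let $\mathcal A\subseteq 2^\Pi\setminus\{\emptyset\}$ be a symmetric adversary. Then $\mathit{setcon}(\mathcal A)=|\{k\in\{1,\dots,n\}:\exists S\in\mathcal A,\ |S|=k\}|$.
   Context: An adversary is a set $\mathcal A\subseteq 2^\Pi$ of subsets (live sets) of the process set $\Pi=\{p_1,\dots,p_n\}$. It is symmetric if for all $S\in\mathcal A$ and all $S'\subseteq\Pi$ with $|S'|=|S|$, $S'\in\mathcal A$. $\mathcal A|_P=\{S\in\mathcal A: S\subseteq P\}$. The set consensus power is defined recursively by $\mathit{setcon}(\emptyset)=0$ and, for $\mathcal A\ne\emptyset$, $\mathit{setcon}(\mathcal A)=\max_{S\in\mathcal A}\min_{a\in S}\mathit{setcon}(\mathcal A|_{S\setminus\{a\}})+1$. *)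

(* Defs.v *)
From mathcomp Require Import all_boot.
Set Implicit Arguments. Unset Strict Implicit. Unset Printing Implicit Defensive.

(* Processes Pi = 'I_n; an adversary is a set of live sets. *)
Definition restrict n (A : {set {set 'I_n}}) (P : {set 'I_n}) : {set {set 'I_n}} :=
  [set S in A | S \subset P].

Definition symmetric_adv n (A : {set {set 'I_n}}) : Prop :=
  forall S S' : {set 'I_n}, S \in A -> #|S'| = #|S| -> S' \in A.

(* setcon_fuel A m P computes setcon(A|_P) when m > #|P| (fuel).
   Note (A|_P)|_Q = A|_Q for Q \subset P, so recursion only tracks P.
   The min over an empty S defaults to 0 (irrelevant when the empty set
   is not a live set). *)
Fixpoint setcon_fuel n (A : {set {set 'I_n}}) (m : nat) (P : {set 'I_n}) : nat :=
  match m with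
  | 0 => 0
  | m'.+1 =>
    if restrict A P == set0 then 0 else
    (\max_(S in restrict A P)
       (if S == set0 then 0 else \big[minn/m]_(a in S) setcon_fuel A m' (S :\ a))).+1
  end.

Definition setcon n (A : {set {set 'I_n}}) : nat := setcon_fuel A n.+1 setT.

(* Main.v *)
Require Import Defs.
From mathcomp Require Import all_boot.

Set Implicit Arguments. Unset Strict Implicit. Unset Printing Implicit Defensive.

Lemma sub_card_ex (T : finType) (P : {set T}) k :
  k <= #|P| -> exists S : {set T}, S \subset P /\ #|S| = k.
Proof.
elim: k => [|k IH] Hk; first by exists set0; rewrite sub0set cards0.
have [S [SP cS]] := IH (ltnW Hk).
have: (P :\: S) != set0.
  apply/negP=> /eqP h; move: Hk; rewrite -cS.
  have := setD_eq0 P S; rewrite h eqxx => /esym /subset_leq_card hle.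
  by rewrite ltnNge hle.
case/set0Pn=> x; rewrite inE => /andP [xS xP].
exists (x |: S); split.
  by rewrite subUset sub1set xP SP.
by rewrite cardsU1 xS cS.
Qed.

Section Main.
Variable n : nat.
Variable A : {set {set 'I_n}}.
Hypothesis A0 : set0 \notin A.
Hypothesis Asym : symmetric_adv A.

Definition K k := [exists S in A, #|S| == k].
Definition f p := \sum_(0 <= k < p.+1) ((0 < k) && K k : nat).

Lemma fS p : f p.+1 = f p + K p.+1.
Proof. by rewrite /f big_nat_recr. Qed.

Lemma f_le p : f p <= p.
Proof.
elim: p => [|p IH]; first by rewrite /f big_nat1.
by rewrite fS; case: (K p.+1) => /=; rewrite ?addn1 ?addn0 // ltnW.
Qed.

Lemma f_mono p q : p <= q -> f p <= f q.
Proof.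
move=> /subnK <-; elim: (q - p) => [|d IH] //.
by rewrite addSn fS (leq_trans IH) // leq_addr.
Qed.

Lemma f_flat p q : p <= q -> (forall k, p < k <= q -> ~~ K k) -> f q = f p.
Proof.
move=> /subnK <-; elim: (q - p) => [|d IH] H //.
rewrite addSn fS IH; last by move=> k /andP [h1 h2]; apply: H; rewrite h1 /= (leq_trans h2).
by rewrite (negbTE (H _ _)) ?addn0 // leqnn andbT ltnS leq_addl.
Qed.

Lemma K_sub (P : {set 'I_n}) k : K k -> k <= #|P| -> exists2 S, S \in restrict A P & #|S| = k.
Proof.
move=> /exists_inP [S SA /eqP cS] hk.
have [S' [S'P cS']] := sub_card_ex hk.
exists S' => //; rewrite inE S'P andbT; apply: (Asym SA); by rewrite cS'.
Qed.

Lemma iter_minn c m k : c <= m -> iter k.+1 (minn c) m = c.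
Proof.
move=> cm; elim: k => [|k IH] /=; first by apply/minn_idPl.
by rewrite -/(iter k.+1 _ _) IH minnn.
Qed.

Lemma main m (P : {set 'I_n}) : #|P| < m -> setcon_fuel A m P = f #|P|.
Proof.
elim: m P => [|m IH] P //= HP.
case: eqP => [R0|R0].
  apply/esym; rewrite (@f_flat 0) //; first by rewrite /f big_nat1.
  move=> k /andP [k0 kP]; apply/negP => Kk.
  have [S SR _] := K_sub Kk kP; by rewrite R0 inE in SR.
have term : forall S, S \in restrict A P ->
   (if S == set0 then 0 else \big[minn/m.+1]_(a in S) setcon_fuel A m (S :\ a))
   = f (#|S|.-1).
  move=> S; rewrite inE => /andP [SA SP].
  have SnA : S != set0 by apply: contraNneq A0 => <-.
  rewrite (negbTE SnA).
  have cSP := subset_leq_card SP.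
  rewrite (eq_bigr (fun _ => f #|S|.-1)); last first.
    move=> a aS; have := cardsD1 a S; rewrite aS add1n => cS.
    rewrite IH; first by rewrite cS.
    by rewrite -ltnS -cS (leq_ltn_trans cSP).
  rewrite big_const; case/set0Pn: SnA => x xS.
  have: 0 < #|S| by apply/card_gt0P; exists x.
  move: cSP; case: #|S| => // s cSP _; rewrite /= -/(iter s.+1 _ _) iter_minn //.
  by rewrite /= (leq_trans (f_le _)) // (leq_trans (ltnW cSP) (ltnW HP)).
have fSS : forall S, S \in restrict A P -> f #|S| = (f #|S|.-1).+1.
  move=> S; rewrite inE => /andP [SA SP].
  have SnA : S != set0 by apply: contraNneq A0 => <-.
  have: 0 < #|S| by case/set0Pn: SnA => x xS; apply/card_gt0P; exists x.
  have KS : K #|S| by apply/exists_inP; exists S.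
  by case: #|S| KS => // s KS _; rewrite fS /= KS addn1.
have [S0 S0R] : exists S0, S0 \in restrict A P.
  by apply/set0Pn; apply/eqP.
case: (arg_maxnP (fun S : {set 'I_n} => #|S|) S0R) => Sm SmR Smax.
have {}SmR : Sm \in restrict A P := SmR.
have {}Smax : forall S, S \in restrict A P -> #|S| <= #|Sm| := Smax.
have hflat : f #|P| = f #|Sm|.
  apply: f_flat.
  - by move: SmR; rewrite inE => /andP [_ /subset_leq_card].
  - move=> k /andP [k1 k2]; apply/negP => Kk.
    have [S SR cS] := K_sub Kk k2.
    by have := Smax _ SR; rewrite cS leqNgt k1.
rewrite hflat fSS //; congr S; apply/eqP; rewrite eqn_leq; apply/andP; split.
  apply/bigmax_leqP => S SR; rewrite term //.
  by apply: f_mono; rewrite -!subn1 leq_sub2r //; exact: (Smax _ SR).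
by rewrite -term //; exact: (leq_bigmax_cond _ SmR).
Qed.
End Main.

Theorem mainTheorem8 (n : nat) (A : {set {set 'I_n}}) :
  set0 \notin A -> symmetric_adv A ->
  setcon A = #|[set k : 'I_n.+1 | (1 <= k) && [exists S in A, #|S| == k]]|.
Proof.
move=> A0 As; rewrite /setcon (@main _ _ A0 As n.+1 setT) ?cardsT ?card_ord //.
rewrite -sum1_card /f big_mkord /=.
rewrite [RHS]big_mkcond; apply: eq_bigr => i _; rewrite inE /K; by case: (_ && _).
Qed.
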